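(* Let $J : \mathfrak{n} \rightarrow \mathfrak{n}$ be any linear map. $J$ has zero torsion if and only if it is equivalent to one of the endomorphisms defined in the basis $(x_1,x_2,x_3)$ by: (i) $S(\xi^3_3)=\begin{pmatrix} 0&-1&0\\ 1&0&0\\ 0&0&\xi^3_3 \end{pmatrix}$, $\xi^3_3 \in \mathbb{R}$; (ii) $D(\xi^1_1)=\begin{pmatrix} \xi^1_1&0&0\\ 0&\xi^1_1&0\\ 0&0&\frac{(\xi^1_1)^2-1}{2\xi^1_1} \end{pmatrix}$, $\xi^1_1 \in \mathbb{R}$, $\xi^1_1 \neq 0$; (iii) $T(a,b)=\begin{pmatrix} 0&-ab&0\\ 1&b&0\\ 0&0&\frac{ab-1}{b} \end{pmatrix}$, $a,b \in \mathbb{R}$, $b \neq 0$. Any two distinct endomorphisms in the preceding list are non equivalent. $T(a,b)$ is equivalent to $T'(a,b)=\begin{pmatrix} b&-b&0\\ a&0&0\\ 0&0&\frac{ab-1}{b} \end{pmatrix}$.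
   Context: $\mathfrak{n}$ is the real 3-dimensional Heisenberg Lie algebra with basis $(x_1,x_2,x_3)$ and commutation relations $[x_1,x_2]=x_3$. A linear map $J:\mathfrak{g}\to\mathfrak{g}$ on a real Lie algebra has zero torsion if $[JX,JY]-[X,Y]-J[JX,Y]-J[X,JY]=0$ for all $X,Y\in\mathfrak{g}$. Two such maps $J,J'$ are equivalent if $J'=\Phi\circ J\circ\Phi^{-1}$ for some $\Phi\in\mathrm{Aut}\,\mathfrak{g}$. *)

(* Defs.v *)
From HB Require Import structures.
From mathcomp Require Import all_boot all_order all_algebra.
From mathcomp Require Import reals.
Set Implicit Arguments. Unset Strict Implicit. Unset Printing Implicit Defensive.
Import Order.TTheory GRing.Theory Num.Theory.
Local Open Scope ring_scope.

Section Heis.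
Variable R : realType.

(* Vectors of the Heisenberg algebra n = R^3 in coordinates w.r.t. (x1,x2,x3),
   as column vectors; x_{i+1} is the i-th standard basis vector. *)
Definition hvec := 'cV[R]_3.

(* Lie bracket: [x1,x2] = x3, all other brackets of basis vectors zero
   (besides antisymmetry). [X,Y] = (X1 Y2 - X2 Y1) x3. *)
Definition hbr (X Y : hvec) : hvec :=
  (X 0 0 * Y 1 0 - X 1 0 * Y 0 0) *: delta_mx 2 0.

(* A linear map J : n -> n is represented by its matrix in the basis
   (x1,x2,x3), acting by J *m X (column j = image of x_{j+1}). *)
Definition zero_torsion (J : 'M[R]_3) : Prop :=
  forall X Y : hvec,
    hbr (J *m X) (J *m Y) - hbr X Y - J *m hbr (J *m X) Y - J *m hbr X (J *m Y) = 0.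

Definition is_aut (P : 'M[R]_3) : Prop :=
  P \in unitmx /\ forall X Y : hvec, P *m hbr X Y = hbr (P *m X) (P *m Y).

Definition equivJ (J J' : 'M[R]_3) : Prop :=
  exists P, is_aut P /\ J' = P *m J *m invmx P.

Definition mx3 (a b c d e f g h k : R) : 'M[R]_3 :=
  \matrix_(i < 3, j < 3)
    nth 0 (nth [::] [:: [:: a; b; c]; [:: d; e; f]; [:: g; h; k]] i) j.

Definition Smx (xi33 : R) := mx3 0 (-1) 0 1 0 0 0 0 xi33.
Definition Dmx (xi11 : R) :=
  mx3 xi11 0 0 0 xi11 0 0 0 ((xi11 ^+ 2 - 1) / (2 * xi11)).
Definition Tmx (a b : R) := mx3 0 (- (a * b)) 0 1 b 0 0 0 ((a * b - 1) / b).
Definition T'mx (a b : R) := mx3 b (- b) 0 a 0 0 0 0 ((a * b - 1) / b).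

Definition in_list (J : 'M[R]_3) : Prop :=
  (exists xi33 : R, J = Smx xi33)
  \/ (exists xi11 : R, xi11 != 0 /\ J = Dmx xi11)
  \/ (exists a b : R, b != 0 /\ J = Tmx a b).

End Heis.

(* Main.v *)
Require Import Defs.
From HB Require Import structures.
From mathcomp Require Import all_boot all_order all_algebra.
From mathcomp Require Import reals.
From mathcomp Require Import ring lra.
Set Implicit Arguments. Unset Strict Implicit. Unset Printing Implicit Defensive.
Import Order.TTheory GRing.Theory Num.Theory.
Local Open Scope ring_scope.


Section H.
Variable R : realType.

Definition cv3 (x y z : R) : 'cV[R]_3 := \col_(i < 3) nth 0 [:: x; y; z] i.

Ltac ordcase i := case: i => [[|[|[|?]]] ?] //.

Lemma mx3_eta (M : 'M[R]_3) :
  M = mx3 (M 0 0) (M 0 1) (M 0 2) (M 1 0) (M 1 1) (M 1 2) (M 2 0) (M 2 1) (M 2 2).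
Proof.
apply/matrixP => i j; rewrite !mxE; ordcase i; ordcase j; congr (M _ _); exact: val_inj.
Qed.

Lemma cv3_eta (X : 'cV[R]_3) : X = cv3 (X 0 0) (X 1 0) (X 2 0).
Proof.
apply/matrixP => i j; rewrite !mxE; ordcase i; ordcase j; congr (X _ _); exact: val_inj.
Qed.

Lemma mulmx3 (a b c d e f g h k a' b' c' d' e' f' g' h' k' : R) :
  mx3 a b c d e f g h k *m mx3 a' b' c' d' e' f' g' h' k' =
  mx3 (a*a'+b*d'+c*g') (a*b'+b*e'+c*h') (a*c'+b*f'+c*k')
      (d*a'+e*d'+f*g') (d*b'+e*e'+f*h') (d*c'+e*f'+f*k')
      (g*a'+h*d'+k*g') (g*b'+h*e'+k*h') (g*c'+h*f'+k*k').
Proof.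
apply/matrixP => i j; rewrite !mxE !big_ord_recr big_ord0 /= !mxE /= add0r.
by ordcase i; ordcase j.
Qed.

Lemma mulmxv3 (a b c d e f g h k x y z : R) :
  mx3 a b c d e f g h k *m cv3 x y z = cv3 (a*x+b*y+c*z) (d*x+e*y+f*z) (g*x+h*y+k*z).
Proof.
apply/matrixP => i j; rewrite !mxE !big_ord_recr big_ord0 /= !mxE /= add0r.
by ordcase i; ordcase j.
Qed.

Lemma cv3B x y z x' y' z' : cv3 x y z - cv3 x' y' z' = cv3 (x-x') (y-y') (z-z').
Proof. by apply/matrixP => i j; rewrite !mxE; ordcase i. Qed.

Lemma cv3Z s x y z : s *: cv3 x y z = cv3 (s*x) (s*y) (s*z).
Proof. by apply/matrixP => i j; rewrite !mxE; ordcase i. Qed.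

Lemma hbr3 x y z x' y' z' : hbr (cv3 x y z) (cv3 x' y' z') = cv3 0 0 (x*y'-y*x').
Proof. by apply/matrixP => i j; rewrite !mxE; ordcase i; ordcase j => /=; rewrite ?mulr0 ?mulr1. Qed.

Lemma cv3_inj x y z x' y' z' : cv3 x y z = cv3 x' y' z' -> [/\ x = x', y = y' & z = z'].
Proof.
move=> E; split.
- by have := congr1 (fun M : 'cV_3 => M 0 0) E; rewrite !mxE.
- by have := congr1 (fun M : 'cV_3 => M 1 0) E; rewrite !mxE.
- by have := congr1 (fun M : 'cV_3 => M 2 0) E; rewrite !mxE.
Qed.

Lemma mx3_inj (a b c d e f g h k a' b' c' d' e' f' g' h' k' : R) :
  mx3 a b c d e f g h k = mx3 a' b' c' d' e' f' g' h' k' ->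
  a = a' /\ b = b' /\ c = c' /\ d = d' /\ e = e' /\ f = f' /\ g = g' /\ h = h' /\ k = k'.
Proof.
move=> E; have F i j := congr1 (fun M : 'M_3 => M i j) E.
have := F 0 0; have := F 0 1; have := F 0 2; have := F 1 0; have := F 1 1;
have := F 1 2; have := F 2 0; have := F 2 1; have := F 2 2.
by rewrite !mxE /= => *; do !split.
Qed.
End H.



Section H2.
Variable R : realType.
Implicit Types (J K P Q : 'M[R]_3) (X Y : 'cV[R]_3).

Definition tors J X Y :=
  hbr (J *m X) (J *m Y) - hbr X Y - J *m hbr (J *m X) Y - J *m hbr X (J *m Y).

Lemma aut1 : is_aut (1%:M : 'M[R]_3).
Proof. by split; [exact: unitmx1 | move=> X Y; rewrite !mul1mx]. Qed.

Lemma autM P Q : is_aut P -> is_aut Q -> is_aut (P *m Q).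
Proof.
move=> [Pu HP] [Qu HQ]; split; first by rewrite unitmx_mul Pu Qu.
by move=> X Y; rewrite -mulmxA HQ HP !mulmxA.
Qed.

Lemma autV P : is_aut P -> is_aut (invmx P).
Proof.
move=> [Pu HP]; split; first by rewrite unitmx_inv.
move=> X Y; rewrite -{1}(mulKVmx Pu X) -{1}(mulKVmx Pu Y) -HP.
by rewrite mulKmx.
Qed.

Lemma equivJ_refl J : equivJ J J.
Proof. by exists 1%:M; split; [exact: aut1|rewrite mul1mx invmx1 mulmx1]. Qed.

Lemma equivJ_sym J K : equivJ J K -> equivJ K J.
Proof.
move=> [P [[Pu HP] ->]]; exists (invmx P); split; first exact: autV.
by rewrite invmxK !mulmxA (mulVmx Pu) mul1mx mulmxKV.
Qed.

Lemma equivJ_of P J K : is_aut P -> K *m P = P *m J -> equivJ J K.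
Proof.
move=> aP E; exists P; split => //; case: aP => Pu _.
by rewrite -E mulmxK.
Qed.

Lemma equivJ_trans J K L : equivJ J K -> equivJ K L -> equivJ J L.
Proof.
move=> [P [aP ->]] [Q [aQ ->]]; apply: (@equivJ_of (Q *m P)); first exact: autM.
case: aP => Pu _; case: aQ => Qu _.
by rewrite !mulmxA mulmxKV // mulmxKV.
Qed.

Lemma equivJ_eq J K : equivJ J K -> exists P, is_aut P /\ K *m P = P *m J.
Proof.
move=> [P [aP ->]]; exists P; split => //; case: aP => Pu _.
by rewrite mulmxKV.
Qed.

Lemma tors_nat P J X Y : is_aut P ->
  tors (P *m J *m invmx P) (P *m X) (P *m Y) = P *m tors J X Y.
Proof.
move=> [Pu HP].
have KP Z : P *m J *m invmx P *m (P *m Z) = P *m (J *m Z).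
  by rewrite -!mulmxA mulKmx.
by rewrite /tors !KP -!HP KP KP !mulmxBr !mulmxA.
Qed.

Lemma zt_equiv J K : equivJ J K -> zero_torsion K -> zero_torsion J.
Proof.
move=> [P [aP ->]] zK X Y.
have := zK (P *m X) (P *m Y); rewrite -/(tors _ _ _) tors_nat //.
case: aP => Pu _ E.
by rewrite -/(tors _ _ _) -(mulKmx Pu (tors J X Y)) E mulmx0.
Qed.
End H2.



Section H3.
Variable R : realType.

Lemma cv30 : (0 : 'cV[R]_3) = cv3 0 0 0.
Proof. by apply/matrixP => i j; rewrite !mxE; case: i => [[|[|[|?]]] ?]. Qed.

Lemma tors3 (a b c d e f g h k x1 x2 x3 y1 y2 y3 : R) :
  tors (mx3 a b c d e f g h k) (cv3 x1 x2 x3) (cv3 y1 y2 y3) = 0 <->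
  let t := (a*x1+b*x2+c*x3)*(d*y1+e*y2+f*y3) - (d*x1+e*x2+f*x3)*(a*y1+b*y2+c*y3) in
  let u := (a*x1+b*x2+c*x3)*y2 - (d*x1+e*x2+f*x3)*y1 + x1*(d*y1+e*y2+f*y3) - x2*(a*y1+b*y2+c*y3) in
  [/\ c * u = 0, f * u = 0 & t - (x1*y2-x2*y1) - k * u = 0].
Proof.
rewrite /tors !mulmxv3 !hbr3 !mulmxv3 !cv3B cv30; split.
  move/cv3_inj => [h1 h2 h3] /=; split.
  - by apply/eqP; rewrite -oppr_eq0; apply/eqP; rewrite -h1; ring.
  - by apply/eqP; rewrite -oppr_eq0; apply/eqP; rewrite -h2; ring.
  - by rewrite -h3; ring.
move=> /= [h1 h2 h3]; congr cv3.
- transitivity (- (c * ((a * x1 + b * x2 + c * x3) * y2 - (d * x1 + e * x2 + f * x3) * y1 +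
   x1 * (d * y1 + e * y2 + f * y3) - x2 * (a * y1 + b * y2 + c * y3))));
   [ring | by rewrite h1 oppr0].
- transitivity (- (f * ((a * x1 + b * x2 + c * x3) * y2 - (d * x1 + e * x2 + f * x3) * y1 +
   x1 * (d * y1 + e * y2 + f * y3) - x2 * (a * y1 + b * y2 + c * y3))));
   [ring | by rewrite h2 oppr0].
- by rewrite -[RHS]h3; ring.
Qed.

Lemma sq0 (x : R) : x * x = 0 -> x = 0.
Proof. by move/eqP; rewrite mulf_eq0 orbb => /eqP. Qed.

Lemma zt_mx3 (a b c d e f g h k : R) :
  zero_torsion (mx3 a b c d e f g h k) <->
  c = 0 /\ f = 0 /\ a*e - b*d - 1 = (a+e)*k.
Proof.
split.
  move=> H.
  have /tors3 /= [h1 h2 h3] := H (cv3 1 0 0) (cv3 0 0 1).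
  have f0 : f = 0 by apply: sq0; rewrite -h2; ring.
  have /tors3 /= [h4 h5 h6] := H (cv3 0 1 0) (cv3 0 0 1).
  have c0 : c = 0 by apply: sq0; apply/eqP; rewrite -oppr_eq0; apply/eqP; rewrite -h4; ring.
  have /tors3 /= [h7 h8 h9] := H (cv3 1 0 0) (cv3 0 1 0).
  do !split => //; apply/eqP; rewrite -subr_eq0; apply/eqP; rewrite -h9; ring.
move=> [c0 [f0 rel]] X Y; rewrite (cv3_eta X) (cv3_eta Y); apply/tors3 => /=.
rewrite c0 f0 !mul0r; split => //.
transitivity ((a*e-b*d-1-(a+e)*k) * (X 0 0 * Y 1 0 - X 1 0 * Y 0 0)); first ring.
by rewrite rel subrr mul0r.
Qed.
End H3.



Section H4.
Variable R : realType.

Lemma mx3_1 : (1%:M : 'M[R]_3) = mx3 1 0 0 0 1 0 0 0 1.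
Proof.
by apply/matrixP => i j; rewrite !mxE; case: i => [[|[|[|?]]] ?]; case: j => [[|[|[|?]]] ?].
Qed.

Lemma aut_mx3 (p q r s u v : R) : p*s - q*r != 0 ->
  is_aut (mx3 p q 0 r s 0 u v (p*s-q*r)).
Proof.
move=> hd; split.
  set d := p*s - q*r.
  have: mx3 (s/d) (-q/d) 0 (-r/d) (p/d) 0 (-(u*s - v*r)/d^+2) (-(- u * q + v * p)/d^+2) (1/d)
          *m mx3 p q 0 r s 0 u v d = 1%:M.
    rewrite mulmx3 mx3_1 /d; congr mx3; field => //.
  by move/mulmx1_unit => [].
move=> X Y; rewrite (cv3_eta X) (cv3_eta Y) hbr3 !mulmxv3 hbr3; congr cv3; ring.
Qed.

Lemma aut_form (P : 'M[R]_3) : is_aut P ->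
  exists p q r s u v : R, p*s - q*r != 0 /\ P = mx3 p q 0 r s 0 u v (p*s-q*r).
Proof.
move=> [Pu HP].
have := HP (cv3 1 0 0) (cv3 0 1 0).
rewrite {1 2 3}(mx3_eta P) hbr3 !mulmxv3 hbr3.
move/cv3_inj => /= [h1 h2 h3].
rewrite !(mulr0, mulr1, mul1r, mul0r, addr0, add0r, subr0) in h1 h2 h3.
exists (P 0 0), (P 0 1), (P 1 0), (P 1 1), (P 2 0), (P 2 1); split; last first.
  rewrite {1}(mx3_eta P) h1 h2 h3; congr mx3; ring.
apply/eqP => d0.
have E : P *m cv3 0 0 1 = 0.
  rewrite {1}(mx3_eta P) mulmxv3 cv30 h1 h2 h3 -[X in _ - X](mulrC (P 0 1)) d0; congr cv3; ring.
have := mulKmx Pu (cv3 0 0 1); rewrite E mulmx0 cv30.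
by move/esym/cv3_inj => [_ _ /eqP]; rewrite oner_eq0.
Qed.
End H4.



Section H5.
Variable R : realType.

Lemma part3 (a b : R) : b != 0 -> equivJ (Tmx a b) (T'mx a b).
Proof.
move=> b0.
have hd : 0 * 0 - (- b) * 1 != 0 :> R by rewrite mul0r sub0r mulr1 opprK.
apply: (equivJ_of (aut_mx3 0 0 hd)).
rewrite /Tmx /T'mx !mulmx3; congr mx3; ring.
Qed.

Lemma step1 (a b d e g h k : R) : a*e - b*d - 1 = (a+e)*k ->
  equivJ (mx3 a b 0 d e 0 g h k) (mx3 a b 0 d e 0 0 0 k).
Proof.
move=> rel.
have en : (a-k)*(e-k) - b*d != 0.
  have -> : (a-k)*(e-k) - b*d = 1 + k^+2.
    transitivity ((a*e - b*d - 1) - (a+e)*k + 1 + k^+2); first ring.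
    by rewrite rel subrr add0r.
  by apply/lt0r_neq0; apply: ltr_pwDl => //; apply: sqr_ge0.
have hd : 1 * 1 - 0 * 0 != 0 :> R by rewrite mulr1 mulr0 subr0 oner_eq0.
apply: (equivJ_of (aut_mx3 ((- g * (e-k) + h * d) / ((a-k)*(e-k) - b*d))
                  ((g * b - h * (a-k)) / ((a-k)*(e-k) - b*d)) hd)).
rewrite !mulmx3; congr mx3; try ring; field => //.
Qed.

Lemma to_comp (a b d e k : R) : ~ (b = 0 /\ d = 0 /\ a = e) ->
  equivJ (mx3 a b 0 d e 0 0 0 k) (mx3 0 (-(a*e-b*d)) 0 1 (a+e) 0 0 0 k).
Proof.
move=> ns; apply: equivJ_sym.
have [d0|d0] := eqVneq d 0.
  have [b0|b0] := eqVneq b 0.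
    have ae : e - a != 0.
      by rewrite subr_eq0; apply/eqP => ea; apply: ns; rewrite b0 d0 ea.
    have hd : 1 * e - a * 1 != 0 by rewrite mul1r mulr1.
    apply: (equivJ_of (aut_mx3 0 0 hd)).
    rewrite !mulmx3 b0 d0; congr mx3; ring.
  have hd : 0 * e - b * 1 != 0 by rewrite mul0r sub0r mulr1 oppr_eq0.
  apply: (equivJ_of (aut_mx3 0 0 hd)).
  rewrite !mulmx3 d0; congr mx3; ring.
have hd : 1 * d - a * 0 != 0 by rewrite mul1r mulr0 subr0.
apply: (equivJ_of (aut_mx3 0 0 hd)).
rewrite !mulmx3; congr mx3; ring.
Qed.

Lemma comp_list (a b d e k : R) : a*e - b*d - 1 = (a+e)*k ->
  in_list (mx3 0 (-(a*e-b*d)) 0 1 (a+e) 0 0 0 k).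
Proof.
move=> rel.
have [t0|t0] := eqVneq (a+e) 0.
  have d1 : a*e - b*d = 1 by apply/eqP; rewrite -subr_eq0 rel t0 mul0r.
  by left; exists k; rewrite /Smx d1 t0.
right; right; exists ((a*e-b*d)/(a+e)), (a+e); split => //.
rewrite /Tmx; congr mx3; first by rewrite divfK.
rewrite divfK //; apply: (mulIf t0); rewrite divfK // rel; ring.
Qed.

Lemma step2 (a b d e k : R) : a*e - b*d - 1 = (a+e)*k ->
  exists J0, in_list J0 /\ equivJ (mx3 a b 0 d e 0 0 0 k) J0.
Proof.
move=> rel.
case: (boolP [&& b == 0, d == 0 & a == e]) => [/and3P [/eqP b0 /eqP d0 /eqP ae]|ns].
  have a0 : a != 0.
    apply/eqP => a0; move: rel; rewrite b0 d0 -ae a0 => rel.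
    have : (1 : R) = - (0 * 0 - 0 * 0 - 1 - (0+0)*k) by ring.
    by rewrite rel subrr oppr0 => /eqP; rewrite oner_eq0.
  have a2 : 2 * a != 0 by rewrite mulf_neq0 // pnatr_eq0.
  exists (Dmx a); split; first by right; left; exists a.
  have -> : mx3 a b 0 d e 0 0 0 k = Dmx a.
    rewrite /Dmx b0 d0 -ae; congr mx3.
    apply: (mulIf a2); rewrite divfK //; move: rel; rewrite b0 d0 -ae => rel.
    transitivity ((a+a)*k); first ring.
    by rewrite -rel; ring.
  exact: equivJ_refl.
exists (mx3 0 (-(a*e-b*d)) 0 1 (a+e) 0 0 0 k); split; first exact: comp_list.
apply: to_comp => -[b0 [d0 ae]]; move: ns; by rewrite b0 d0 ae !eqxx.
Qed.

Lemma part1 (J : 'M[R]_3) : zero_torsion J <-> exists J0, in_list J0 /\ equivJ J J0.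
Proof.
split.
  rewrite (mx3_eta J) => /zt_mx3 [c0 [f0 rel]].
  rewrite c0 f0; have [J0 [HJ0 E]] := step2 rel.
  by exists J0; split => //; apply: equivJ_trans E; apply: step1.
move=> [J0 [HJ0 E]]; apply: (zt_equiv E).
case: HJ0 => [[x ->]|[[x [x0 ->]]|[a [b [b0 ->]]]]]; apply/zt_mx3; do !split => //.
all: try ring; field; try done.
Qed.
End H5.



Section H6.
Variable R : realType.

Ltac eqr h := apply: (etrans _ (etrans h _)); ring.

Lemma equiv_block (m11 m12 m21 m22 j n11 n12 n21 n22 k : R) :
  equivJ (mx3 m11 m12 0 m21 m22 0 0 0 j) (mx3 n11 n12 0 n21 n22 0 0 0 k) ->
  exists p q r s : R, p*s - q*r != 0 /\ k = j /\
   n11* p + n12*r = p* m11 + q* m21 /\ n11*q + n12*s = p* m12 + q* m22 /\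
   n21* p + n22*r = r* m11 + s* m21 /\ n21*q + n22*s = r* m12 + s* m22.
Proof.
move=> /equivJ_eq [P [aP EP]].
have [p [q [r [s [u [v [hd PE]]]]]]] := aut_form aP.
move: EP; rewrite PE !mulmx3 => /mx3_inj [h11 [h12 [_ [h21 [h22 [_ [_ [_ h33]]]]]]]].
exists p, q, r, s; split => //; split.
  apply: (mulIf hd); eqr h33.
by do !split; [eqr h11 | eqr h12 | eqr h21 | eqr h22].
Qed.

Lemma tr_det (m11 m12 m21 m22 n11 n12 n21 n22 p q r s : R) : p*s - q*r != 0 ->
   n11* p + n12*r = p* m11 + q* m21 -> n11*q + n12*s = p* m12 + q* m22 ->
   n21* p + n22*r = r* m11 + s* m21 -> n21*q + n22*s = r* m12 + s* m22 ->
   n11 + n22 = m11 + m22 /\ n11*n22 - n12*n21 = m11* m22 - m12* m21.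
Proof.
move=> hd e11 e12 e21 e22; split; apply: (mulfI hd); apply/eqP; rewrite -subr_eq0; apply/eqP.
  transitivity (s*((n11* p + n12*r) - (p* m11 + q* m21)) - q*((n21* p + n22*r) - (r* m11 + s* m21))
     - r*((n11*q + n12*s) - (p* m12 + q* m22)) + p*((n21*q + n22*s) - (r* m12 + s* m22))); first ring.
  by rewrite e11 e12 e21 e22 !subrr !mulr0 !subrr addr0.
transitivity (((n11* p + n12*r)*(n21*q + n22*s) - (n11*q + n12*s)*(n21* p + n22*r))
   - ((p* m11 + q* m21)*(r* m12 + s* m22) - (p* m12 + q* m22)*(r* m11 + s* m21))); first ring.
by rewrite e11 e12 e21 e22 subrr.
Qed.

Lemma scal_sim (x n11 n12 n21 n22 p q r s : R) : p*s - q*r != 0 ->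
   n21* p + n22*r = r*x + s*0 -> n21*q + n22*s = r*0 + s*x -> n21 = 0.
Proof.
move=> hd e21 e22; apply: (mulIf hd); rewrite mul0r.
transitivity (s*((n21* p + n22*r) - (r*x + s*0)) - r*((n21*q + n22*s) - (r*0 + s*x))); first ring.
by rewrite e21 e22 !subrr !mulr0 subrr.
Qed.
End H6.



Section H7.
Variable R : realType.

Lemma part2 (J1 J2 : 'M[R]_3) : in_list J1 -> in_list J2 -> J1 <> J2 -> ~ equivJ J1 J2.
Proof.
move=> H1 H2 ne E.
case: H1 => [[x E1]|[[x [x0 E1]]|[a [b [b0 E1]]]]];
case: H2 => [[y E2]|[[y [y0 E2]]|[a' [b' [b0' E2]]]]];
rewrite {}E1 {}E2 /Smx /Dmx /Tmx in ne E;
have [p [q [r [s [hd [kj [e11 [e12 [e21 e22]]]]]]]]] := equiv_block E;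
have [tr dt] := tr_det hd e11 e12 e21 e22.
- by apply: ne; rewrite kj.
- have y0' : y = 0 by lra.
  by rewrite y0' eqxx in y0.
- have b0'' : b' = 0 by lra.
  by rewrite b0'' eqxx in b0'.
- have x0' : x = 0 by lra.
  by rewrite x0' eqxx in x0.
- have yx : y = x by lra.
  by apply: ne; rewrite yx.
- have := scal_sim 0 0 hd e21 e22.
  by move/eqP; rewrite oner_eq0.
- have b0'' : b = 0 by lra.
  by rewrite b0'' eqxx in b0.
- have [p' [q' [r' [s' [hd' [_ [_ [_ [e21' e22']]]]]]]]] := equiv_block (equivJ_sym E).
  have := scal_sim 0 0 hd' e21' e22'.
  by move/eqP; rewrite oner_eq0.
- have bb : b' = b by lra.
  have aa : a' = a.
    apply: (mulIf b0); rewrite -bb.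
    transitivity (0 * b' - - (a' * b') * 1); first ring.
    by rewrite dt bb; ring.
  by apply: ne; rewrite aa bb.
Qed.
End H7.


Theorem lemma3 (R : realType) :
  (forall J : 'M[R]_3,
      zero_torsion J <-> exists J0, in_list J0 /\ equivJ J J0)
  /\ (forall J1 J2 : 'M[R]_3,
        in_list J1 -> in_list J2 -> J1 <> J2 -> ~ equivJ J1 J2)
  /\ (forall a b : R, b != 0 -> equivJ (Tmx a b) (T'mx a b)).
Proof.
split; first exact: part1.
split; first exact: part2.
exact: part3.
Qed.
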